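(* Let $\beta\in\mathbb{F}_{p^m}\setminus\{0\}$ and let $\mathcal{C}=\left\langle\left(x^2+\gamma x+\frac{\gamma^2}{2}\right)^i\left(x^2-\gamma x+\frac{\gamma^2}{2}\right)^j\right\rangle$, $0\le i,j\le 2p^s$, be an $(\alpha+\beta u)$-constacyclic code of length $4p^s$ over $R$. Then its dual code, viewed as an ideal of $R[x]/\langle x^{4p^s}-(\alpha+\beta u)^{-1}\rangle$, is $$\mathcal{C}^{\perp}=\left\langle\left(x^2+2\gamma^{-1}x+\tfrac{2}{\gamma^2}\right)^{2p^s-i}\left(x^2-2\gamma^{-1}x+\tfrac{2}{\gamma^2}\right)^{2p^s-j}\right\rangle.$$
   Context: Let $p$ be an odd prime and $m,s$ positive integers with $p^m\equiv 3\pmod 4$; $\mathbb{F}_{p^m}$ is the field with $p^m$ elements and $R=\mathbb{F}_{p^m}[u]/\langle u^2\rangle$. Fix $\alpha\in\mathbb{F}_{p^m}\setminus\{0\}$ that is not a square in $\mathbb{F}_{p^m}$, let $\alpha_0\in\mathbb{F}_{p^m}$ satisfy $\alpha_0^{p^s}=\alpha$, and let $\gamma\in\mathbb{F}_{p^m}$ satisfy $\gamma^4+4\alpha_0=0$. A $\lambda$-constacyclic code of length $n$ over $R$ ($\lambda$ a unit) is identified with an ideal of $R[x]/\langle x^n-\lambda\rangle$ via $(c_0,\dots,c_{n-1})\mapsto\sum c_ix^i$. The dual code is $\mathcal{C}^\perp=\{a\in R^n: \sum_k a_kc_k=0\ \forall c\in\mathcal{C}\}$, which is a $\lambda^{-1}$-constacyclic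 code and hence identified with an ideal of $R[x]/\langle x^n-\lambda^{-1}\rangle$. *)

(* Defs.v *)
From HB Require Import structures.
From mathcomp Require Import all_boot all_order all_algebra all_field.
Set Implicit Arguments. Unset Strict Implicit. Unset Printing Implicit Defensive.
Import GRing.Theory.
Local Open Scope ring_scope.

(* R = F[u]/<u^2>: elements a + b u represented as pairs (a, b). *)
Section DualNumbers.
Variable F : fieldType.
Definition dualnum : Type := (F * F)%type.
HB.instance Definition _ := GRing.Zmodule.copy dualnum (F * F)%type.
Definition dmul (x y : dualnum) : dualnum := (x.1 * y.1, x.1 * y.2 + x.2 * y.1).
Definition done : dualnum := (1, 0).
Lemma dmulA : associative dmul.
Proof. by move=> [a b] [c d] [e f]; rewrite /dmul /=; congr pair; rewrite ?mulrA // !mulrDr !mulrDl !mulrA addrA. Qed.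
Lemma dmulC : commutative dmul.
Proof. by move=> [a b] [c d]; rewrite /dmul /= mulrC [b * c]mulrC [a * d]mulrC addrC. Qed.
Lemma dmul1 : left_id done dmul.
Proof. by move=> [a b]; rewrite /dmul /= mul1r mul0r addr0 mul1r. Qed.
Lemma dmulDl : left_distributive dmul +%R.
Proof. by move=> [a b] [c d] [e f]; rewrite /dmul /= mulrDl; congr pair; rewrite !mulrDl addrACA. Qed.
Lemma done_neq0 : done != 0.
Proof. by apply/negP => /eqP [] /eqP; rewrite oner_eq0. Qed.
HB.instance Definition _ := GRing.Zmodule_isComNzRing.Build dualnum dmulA dmulC dmul1 dmulDl done_neq0.
Definition dn (a b : F) : dualnum := (a, b).
End DualNumbers.

Definition dconst (F : fieldType) (a : F) : dualnum F := (a, 0).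

Definition word_poly (R : nzRingType) (n : nat) (c : 'rV[R]_n) : {poly R} :=
  \sum_(k < n) c 0 k *: 'X^k.

(* The lambda-constacyclic code of length n identified with the ideal <g> of
   R[x]/<x^n - lambda>: the words whose polynomial (of degree < n, i.e. the
   canonical representative of its residue class) is congruent to a multiple
   of g modulo x^n - lambda. *)
Definition constacyclic_ideal (R : nzRingType) (n : nat) (lam : R) (g : {poly R})
  : 'rV[R]_n -> Prop :=
  fun c => exists f h : {poly R}, word_poly c = f * g + h * ('X^n - lam%:P).

Definition dual_code (R : nzRingType) (n : nat) (C : 'rV[R]_n -> Prop)
  : 'rV[R]_n -> Prop :=
  fun a => forall c, C c -> \sum_(k < n) a 0 k * c 0 k = 0.

(* Main.v *)
Require Import Defs.
From HB Require Import structures.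
From mathcomp Require Import all_boot all_order all_algebra all_field.
From mathcomp Require Import zify ring.
Import GRing.Theory.
Local Open Scope ring_scope.

Set Implicit Arguments. Unset Strict Implicit. Unset Printing Implicit Defensive.

Section Rev.
Variable F : fieldType.
Implicit Types p q : {poly F}.

Definition revn (N : nat) p : {poly F} := \poly_(j < N) p`_(N.-1 - j).

Lemma coef_revn N p j : (revn N p)`_j = if (j < N)%N then p`_(N.-1 - j) else 0.
Proof. by rewrite coef_poly. Qed.

Lemma revnD N p q : revn N (p + q) = revn N p + revn N q.
Proof. by apply/polyP=> j; rewrite coefD !coef_revn coefD; case: ifP; rewrite ?addr0. Qed.

Lemma revnZ N c p : revn N (c *: p) = c *: revn N p.
Proof. by apply/polyP=> j; rewrite coefZ !coef_revn coefZ; case: ifP; rewrite ?mulr0. Qed.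

Lemma revn_sum N (I : finType) (G : I -> {poly F}) :
  revn N (\sum_i G i) = \sum_i revn N (G i).
Proof.
apply: (big_rec2 (fun a b => revn N b = a)).
  by apply/polyP=> j; rewrite coef_revn !coef0; case: ifP.
by move=> i a b _ <-; rewrite revnD.
Qed.

Lemma size_revn N p : (size (revn N p) <= N)%N.
Proof. exact: size_poly. Qed.

Lemma revnK N p : (size p <= N)%N -> revn N (revn N p) = p.
Proof.
move=> sp; apply/polyP=> j; rewrite !coef_revn.
case: ifP => jN.
  rewrite ifT; last by lia.
  by congr (p`_ _); lia.
by rewrite nth_default //; apply: leq_trans sp _; lia.
Qed.

Lemma revn_XnM N1 N2 i q : (i < N1)%N -> (size q <= N2)%N ->
  revn (N1 + N2).-1 ('X^i * q) = 'X^(N1.-1 - i) * revn N2 q.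
Proof.
move=> iN sq; apply/polyP=> j; rewrite coef_revn !coefXnM coef_revn.
case: (ltnP j (N1 + N2).-1) => j1.
  case: (ltnP ((N1 + N2).-1.-1 - j) i) => j2.
    rewrite ifF; last by apply/negbTE; lia.
    by rewrite ifF //; apply/negbTE; lia.
  case: (ltnP j (N1.-1 - i)) => j3.
    by rewrite nth_default //; apply: leq_trans sq _; lia.
  rewrite ifT; last by lia.
  by congr (q`_ _); lia.
case: ifP => // j3; case: ifP => // j4.
by rewrite nth_default //; apply: leq_trans sq _; lia.
Qed.

Lemma revn_sumform N p : (size p <= N)%N ->
  p = \sum_(i < N) p`_i *: 'X^i.
Proof.
move=> sp; rewrite -poly_def; apply/polyP=> j; rewrite coef_poly.
by case: ifP => // jN; rewrite nth_default //; apply: leq_trans sp _; lia.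
Qed.

Lemma revnM N1 N2 p q : (0 < N1)%N -> (size p <= N1)%N -> (size q <= N2)%N ->
  revn (N1 + N2).-1 (p * q) = revn N1 p * revn N2 q.
Proof.
move=> N1p sp sq.
rewrite {1}(revn_sumform sp) mulr_suml.
under eq_bigr do rewrite -scalerAl.
rewrite revn_sum.
under eq_bigr do rewrite revnZ (revn_XnM (ltn_ord _) sq).
under eq_bigr do rewrite scalerAl.
rewrite -mulr_suml; congr (_ * _).
apply/polyP=> j; rewrite coef_revn coef_sum.
under eq_bigr do rewrite coefZ coefXn.
case: ifP => jN.
  have hk : (N1.-1 - j < N1)%N by lia.
  rewrite (bigD1 (Ordinal hk)) //=.
  have -> : (N1.-1 - (N1.-1 - j) = j)%N by lia.
  rewrite eqxx mulr1 big1 ?addr0 // => i /eqP hi.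
  rewrite (_ : (j == _) = false) ?mulr0 //; apply/negbTE/eqP => hj; apply: hi; apply: val_inj => /=; have := ltn_ord i; lia.
rewrite big1 // => i _; rewrite (_ : (j == _) = false) ?mulr0 //; apply/negbTE/eqP; lia.
Qed.

End Rev.


Section Dual.
Variable F : fieldType.
Notation A := (dualnum F).
Implicit Types h : {poly A}.

Lemma fst0 : (0 : A).1 = 0. Proof. by []. Qed.
Lemma snd0 : (0 : A).2 = 0. Proof. by []. Qed.
Lemma fstD (x y : A) : (x + y).1 = x.1 + y.1. Proof. by []. Qed.
Lemma sndD (x y : A) : (x + y).2 = x.2 + y.2. Proof. by []. Qed.
Lemma fstN (x : A) : (- x).1 = - x.1. Proof. by []. Qed.
Lemma sndN (x : A) : (- x).2 = - x.2. Proof. by []. Qed.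
Lemma fstM (x y : A) : (x * y).1 = x.1 * y.1. Proof. by []. Qed.
Lemma sndM (x y : A) : (x * y).2 = x.1 * y.2 + x.2 * y.1. Proof. by []. Qed.
Lemma fst1 : (1 : A).1 = 1. Proof. by []. Qed.
Lemma snd1 : (1 : A).2 = 0. Proof. by []. Qed.
Lemma fst_sum (I : Type) (r : seq I) (P : pred I) (G : I -> A) :
  (\sum_(i <- r | P i) G i).1 = \sum_(i <- r | P i) (G i).1.
Proof. by apply: (big_rec2 (fun a b => b.1 = a)) => // i a b _ <-. Qed.
Lemma snd_sum (I : Type) (r : seq I) (P : pred I) (G : I -> A) :
  (\sum_(i <- r | P i) G i).2 = \sum_(i <- r | P i) (G i).2.
Proof. by apply: (big_rec2 (fun a b => b.2 = a)) => // i a b _ <-. Qed.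
Lemma fst_nat k : (k%:R : A).1 = k%:R.
Proof. by elim: k => // k IH; rewrite !mulrS fstD IH. Qed.
Lemma snd_nat k : (k%:R : A).2 = 0.
Proof. by elim: k => // k IH; rewrite !mulrS sndD IH addr0. Qed.

Definition P0 h : {poly F} := \poly_(k < size h) (h`_k).1.
Definition P1 h : {poly F} := \poly_(k < size h) (h`_k).2.

Lemma coef_P0 h k : (P0 h)`_k = (h`_k).1.
Proof. by rewrite coef_poly; case: ltnP => // hk; rewrite nth_default. Qed.
Lemma coef_P1 h k : (P1 h)`_k = (h`_k).2.
Proof. by rewrite coef_poly; case: ltnP => // hk; rewrite nth_default. Qed.

Lemma P_ext h1 h2 : P0 h1 = P0 h2 -> P1 h1 = P1 h2 -> h1 = h2.
Proof.
move=> e0 e1; apply/polyP=> k.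
have := congr1 (fun p : {poly F} => p`_k) e0; have := congr1 (fun p : {poly F} => p`_k) e1.
rewrite /= !coef_P0 !coef_P1.
by case: (h1`_k) (h2`_k) => [x y] [z t] /= -> ->.
Qed.

Lemma P0D h1 h2 : P0 (h1 + h2) = P0 h1 + P0 h2.
Proof. by apply/polyP=> k; rewrite coefD !coef_P0 coefD. Qed.
Lemma P1D h1 h2 : P1 (h1 + h2) = P1 h1 + P1 h2.
Proof. by apply/polyP=> k; rewrite coefD !coef_P1 coefD. Qed.
Lemma P0N h : P0 (- h) = - P0 h.
Proof. by apply/polyP=> k; rewrite coefN !coef_P0 coefN. Qed.
Lemma P1N h : P1 (- h) = - P1 h.
Proof. by apply/polyP=> k; rewrite coefN !coef_P1 coefN. Qed.
Lemma P0B h1 h2 : P0 (h1 - h2) = P0 h1 - P0 h2.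
Proof. by rewrite P0D P0N. Qed.
Lemma P1B h1 h2 : P1 (h1 - h2) = P1 h1 - P1 h2.
Proof. by rewrite P1D P1N. Qed.

Lemma P0M h1 h2 : P0 (h1 * h2) = P0 h1 * P0 h2.
Proof.
apply/polyP=> k; rewrite coef_P0 !coefM fst_sum.
by apply: eq_bigr => i _; rewrite fstM !coef_P0.
Qed.
Lemma P1M h1 h2 : P1 (h1 * h2) = P0 h1 * P1 h2 + P1 h1 * P0 h2.
Proof.
apply/polyP=> k; rewrite coef_P1 coefD !coefM snd_sum -big_split /=.
by apply: eq_bigr => i _; rewrite !coef_P0 !coef_P1.
Qed.

Lemma P0C (c : A) : P0 c%:P = (c.1)%:P.
Proof. by apply/polyP=> k; rewrite coef_P0 !coefC; case: eqP. Qed.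
Lemma P1C (c : A) : P1 c%:P = (c.2)%:P.
Proof. by apply/polyP=> k; rewrite coef_P1 !coefC; case: eqP. Qed.
Lemma P0Xn k : P0 'X^k = 'X^k.
Proof. by apply/polyP=> j; rewrite coef_P0 !coefXn fst_nat. Qed.
Lemma P1Xn k : P1 'X^k = 0.
Proof. by apply/polyP=> j; rewrite coef_P1 !coefXn snd_nat coef0. Qed.
Lemma P0map (E : {poly F}) : P0 (map_poly (@dconst F) E) = E.
Proof. by apply/polyP=> j; rewrite coef_P0 coef_map_id0. Qed.
Lemma P1map (E : {poly F}) : P1 (map_poly (@dconst F) E) = 0.
Proof. by apply/polyP=> j; rewrite coef_P1 coef_map_id0 // coef0. Qed.
Lemma P0Z (c : A) h : P0 (c *: h) = c.1 *: P0 h.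
Proof. by apply/polyP=> j; rewrite coef_P0 !coefZ coef_P0. Qed.
Lemma P1Z (c : A) h : P1 (c *: h) = c.1 *: P1 h + c.2 *: P0 h.
Proof. by apply/polyP=> j; rewrite coef_P1 coefD !coefZ coef_P0 coef_P1. Qed.
Lemma P0_sum (I : Type) (r : seq I) (G : I -> {poly A}) :
  P0 (\sum_(i <- r) G i) = \sum_(i <- r) P0 (G i).
Proof.
apply: (big_rec2 (fun a b => P0 b = a)); last by move=> i a b _ <-; rewrite P0D.
by apply/polyP=> j; rewrite coef_P0 !coef0.
Qed.
Lemma P1_sum (I : Type) (r : seq I) (G : I -> {poly A}) :
  P1 (\sum_(i <- r) G i) = \sum_(i <- r) P1 (G i).
Proof.
apply: (big_rec2 (fun a b => P1 b = a)); last by move=> i a b _ <-; rewrite P1D.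
by apply/polyP=> j; rewrite coef_P1 !coef0.
Qed.

Definition p0 n (w : 'rV[A]_n) : {poly F} := \sum_(k < n) (w 0 k).1 *: 'X^k.
Definition p1 n (w : 'rV[A]_n) : {poly F} := \sum_(k < n) (w 0 k).2 *: 'X^k.

Lemma P0word n (w : 'rV[A]_n) : P0 (word_poly w) = p0 w.
Proof.
rewrite /word_poly P0_sum; apply: eq_bigr => k _.
by rewrite P0Z P0Xn.
Qed.
Lemma P1word n (w : 'rV[A]_n) : P1 (word_poly w) = p1 w.
Proof.
rewrite /word_poly P1_sum; apply: eq_bigr => k _.
by rewrite P1Z P0Xn P1Xn scaler0 add0r.
Qed.

Lemma charac n (a b : F) (E : {poly F}) (w : 'rV[A]_n) : b != 0 ->
  (E %| ('X^n - a%:P) ^+ 2 ->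
     constacyclic_ideal (dn a b) (map_poly (@dconst F) E) w ->
     E %| p0 w + b^-1 *: (('X^n - a%:P) * p1 w))
  /\ (E %| p0 w + b^-1 *: (('X^n - a%:P) * p1 w) ->
     constacyclic_ideal (dn a b) (map_poly (@dconst F) E) w).
Proof.
move=> bn0; split.
  move=> ET [f [h eq]].
  have e0 := congr1 P0 eq; have e1 := congr1 P1 eq.
  rewrite P0word P0D !P0M P0map P0B P0Xn P0C /= in e0.
  rewrite P1word P1D !P1M P0map P1map P0B P1B P0Xn P1Xn P0C P1C /= in e1.
  rewrite e0 e1.
  have hc : b^-1%:P * b%:P = 1 by rewrite -polyCM mulVf.
  have -> : P0 f * E + P0 h * ('X^n - a%:P) +
     b^-1 *: (('X^n - a%:P) * (P0 f * 0 + P1 f * E + (P0 h * (0 - b%:P) + P1 h * ('X^n - a%:P))))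
     = E * (P0 f + b^-1 *: (('X^n - a%:P) * P1 f)) + ('X^n - a%:P)^+2 * (b^-1 *: P1 h).
    apply/eqP; rewrite -subr_eq0; apply/eqP; rewrite -!mul_polyC.
    have -> : forall X Y Z U : {poly F}, X * E + Y * ('X^n - a%:P) +
      b^-1%:P * (('X^n - a%:P) * (X * 0 + Z * E + (Y * (0 - b%:P) + U * ('X^n - a%:P)))) -
      (E * (X + b^-1%:P * (('X^n - a%:P) * Z)) + ('X^n - a%:P) ^+ 2 * (b^-1%:P * U))
      = Y * ('X^n - a%:P) * (1 - b^-1%:P * b%:P).
      by move=> X Y Z U; ring.
    by rewrite hc subrr mulr0.
  by apply: dvdp_add; [apply: dvdp_mulr; exact: dvdpp | exact: dvdp_mulr].
move=> /dvdpP [q eq].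
exists (map_poly (@dconst F) q), (map_poly (@dconst F) (- b^-1 *: p1 w)).
apply: P_ext.
  rewrite P0word P0D !P0M !P0map P0B P0Xn P0C /=.
  apply/eqP; rewrite -subr_eq0; apply/eqP.
  rewrite -(addrK (b^-1 *: (('X^n - a%:P) * p1 w)) (p0 w)) eq.
  rewrite -!mul_polyC polyCN; ring.
rewrite P1word P1D !P1M !P0map !P1map P0B P1B P0Xn P1Xn P0C P1C /=.
have hc : b^-1%:P * b%:P = 1 by rewrite -polyCM mulVf.
apply/eqP; rewrite -subr_eq0; apply/eqP; rewrite -!mul_polyC.
have -> : forall X : {poly F}, X - ((q * 0 + 0 * E) +
   ((- b^-1)%:P * X * (0 - b%:P) + 0 * ('X^n - a%:P))) = X * (1 - b^-1%:P * b%:P).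
  move=> X; rewrite polyCN; ring.
by rewrite hc subrr mulr0.
Qed.

End Dual.


Section Core.
Variable F : fieldType.
Variables (n : nat) (alpha b : F).
Hypothesis n_gt0 : (0 < n)%N.
Hypothesis alpha_neq0 : alpha != 0.
Hypothesis b_neq0 : b != 0.
Notation T := ('X^n - alpha%:P : {poly F}).

Lemma sizeT : size T = n.+1.
Proof. exact: size_XnsubC. Qed.
Lemma T_neq0 : T != 0.
Proof. by rewrite -size_poly_gt0 sizeT. Qed.
Lemma sizeT2 : size (T ^+ 2) = (2 * n).+1.
Proof. rewrite expr2 size_mul ?T_neq0 // sizeT; lia. Qed.

Lemma coefZT (Z : {poly F}) : (size Z <= n.-1)%N -> (Z * T)`_(n.-1) = 0.
Proof.
move=> sZ; rewrite mulrBr coefB coefMXn coefMC ifT; last by lia.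
by rewrite nth_default ?mul0r ?subr0.
Qed.

Lemma coef_dvdT (V : {poly F}) : (size V <= (2 * n).-1)%N -> T %| V -> V`_(n.-1) = 0.
Proof.
move=> sV /dvdpP [Z eZ]; rewrite eZ; apply: coefZT.
have [->|Zn0] := eqVneq Z 0; first by rewrite size_poly0.
move: sV; rewrite eZ size_mul ?T_neq0 // sizeT => h; move: (size Z) h n_gt0 => z h h0; lia.
Qed.

Lemma size_lower (r : {poly F}) : (size r <= n)%N -> r`_(n.-1) = 0 -> (size r <= n.-1)%N.
Proof.
move=> sr c0; apply/leq_sizeP => j hj.
have [->|hj'] := eqVneq j n.-1; first by [].
rewrite nth_default //; apply: leq_trans sr _; lia. Qed.

Lemma size_mul_le (p q : {poly F}) x y :
  (size p <= x)%N -> (size q <= y)%N -> (size (p * q)%R <= (x + y).-1)%N.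
Proof.
move=> hp hq; apply: leq_trans (size_polyMleq _ _) _.
by rewrite -!subn1 leq_sub2r // leq_add.
Qed.

Lemma size_XkM k (p : {poly F}) : p != 0 -> size ('X^k * p)%R = (k + size p)%N.
Proof. by move=> pn0; rewrite mulrC size_mulXn. Qed.

Lemma size_mulC (c : F) (p : {poly F}) : (size (c%:P * p)%R <= size p)%N.
Proof. by rewrite mul_polyC size_scale_leq. Qed.

Lemma keyA (c0 c1 r0 r1 : {poly F}) :
  (size c0 <= n)%N -> (size c1 <= n)%N -> (size r0 <= n)%N -> (size r1 <= n)%N ->
  T ^+ 2 %| (c0 + b%:P * (T * c1)) * (alpha%:P * r0 + T * (r0 + (alpha * b)%:P * r1)) ->
  (c0 * r0)`_(n.-1) = 0 /\ (c0 * r1 + c1 * r0)`_(n.-1) = 0.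
Proof.
move=> s0 s1 s2 s3 hd.
have sX0 : (size (c0 * r0)%R <= (2 * n).-1)%N.
  by apply: leq_trans (size_polyMleq _ _) _; lia.
have sX1 : (size (c0 * r1 + c1 * r0)%R <= (2 * n).-1)%N.
  apply: leq_trans (size_polyD _ _) _; rewrite geq_max.
  by apply/andP; split; apply: leq_trans (size_polyMleq _ _) _; lia.
have eGK : (c0 + b%:P * (T * c1)) * (alpha%:P * r0 + T * (r0 + (alpha * b)%:P * r1)) =
  alpha%:P * (c0 * r0) + T * (c0 * r0 + (alpha * b)%:P * (c0 * r1 + c1 * r0))
  + T ^+ 2 * (b%:P * c1 * (r0 + (alpha * b)%:P * r1)).
  rewrite polyCM; ring.
rewrite eGK in hd.
have hT : T %| alpha%:P * (c0 * r0).
  have hT2 : T %| T ^+ 2 by rewrite expr2 dvdp_mulIl.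
  have := dvdp_trans hT2 hd.
  rewrite dvdp_addl; last by apply: dvdp_mulr.
  by rewrite dvdp_addl // dvdp_mulIl.
rewrite mul_polyC dvdpZr // in hT.
have X00 := coef_dvdT sX0 hT.
have sY : (size ((c0 * r0) %/ T)%R <= n.-1)%N.
  rewrite size_divp ?T_neq0 // sizeT /=; apply: leq_trans (leq_sub2r _ sX0) _; lia.
have eX0 := divpK hT.
have hW : T %| alpha%:P * ((c0 * r0) %/ T) + (c0 * r0 + (alpha * b)%:P * (c0 * r1 + c1 * r0)).
  rewrite -(dvdp_mul2l _ _ T_neq0) -expr2.
  set Y := (c0 * r0) %/ T in eX0 *.
  have e : alpha%:P * (c0 * r0) = T * (alpha%:P * Y) by rewrite -eX0; ring.
  move: hd; rewrite (dvdp_addl _ (dvdp_mulIl _ _)) e.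
  by rewrite -mulrDr.
have sW : (size (alpha%:P * ((c0 * r0) %/ T) + (c0 * r0 + (alpha * b)%:P * (c0 * r1 + c1 * r0)))%R <= (2 * n).-1)%N.
  apply: leq_trans (size_polyD _ _) _; rewrite geq_max; apply/andP; split.
    apply: leq_trans (size_mulC _ _) _; apply: leq_trans sY _; lia.
  apply: leq_trans (size_polyD _ _) _; rewrite geq_max; apply/andP; split => //.
  by apply: leq_trans (size_mulC _ _) _.
have := coef_dvdT sW hW.
rewrite coefD coefCM coefD coefCM X00 (nth_default _ sY) mulr0 !add0r.
move/eqP; rewrite mulf_eq0 mulf_eq0 (negbTE alpha_neq0) (negbTE b_neq0) /= => /eqP ->.
by [].
Qed.


Lemma keyB (E E' r0 r1 : {poly F}) :
  E * E' = T ^+ 2 -> (size r0 <= n)%N -> (size r1 <= n)%N ->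
  (forall c0 c1 : {poly F}, (size c0 <= n)%N -> (size c1 <= n)%N ->
     E %| c0 + b%:P * (T * c1) ->
     (c0 * r0)`_(n.-1) = 0 /\ (c0 * r1 + c1 * r0)`_(n.-1) = 0) ->
  E' %| alpha%:P * r0 + T * (r0 + (alpha * b)%:P * r1).
Proof.
move=> eE s2 s3 H.
set K := alpha%:P * r0 + T * (r0 + (alpha * b)%:P * r1).
have T2n0 : T ^+ 2 != 0 by rewrite -size_poly_gt0 sizeT2.
have En0 : E != 0 by apply: contraNneq T2n0 => E0; rewrite -eE E0 mul0r.
case: (boolP (E' %| K)) => // nd; exfalso.
have nd2 : ~~ (T ^+ 2 %| E * K) by rewrite -eE dvdp_mul2l.
set W := (E * K) %% T ^+ 2.
have Wn0 : W != 0 by apply/negP => /eqP /modp_eq0P; apply/negP.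
have sW : (size W <= 2 * n)%N.
  have := ltn_modp (E * K) (T ^+ 2); rewrite T2n0 sizeT2 => h; exact: h.
have sW0 : (0 < size W)%N by rewrite size_poly_gt0.
set k := (2 * n - size W)%N.
set G := ('X^k * E) %% T ^+ 2.
have eG : G = 'X^k * E - ('X^k * E) %/ T ^+ 2 * T ^+ 2.
  have h := divp_eq ('X^k * E) (T ^+ 2); rewrite -/G in h.
  by apply/eqP; rewrite eq_sym subr_eq addrC -h.
have EG : E %| G.
  rewrite eG; apply: dvdp_sub; first exact: dvdp_mulIr.
  by apply: dvdp_mull; rewrite -eE dvdp_mulIl.
have sG : (size G <= 2 * n)%N.
  have := ltn_modp ('X^k * E) (T ^+ 2); rewrite T2n0 sizeT2 => h; exact: h.
set c0 := G %% T.
set c1 := b^-1%:P * (G %/ T).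
have sc0 : (size c0 <= n)%N.
  have := ltn_modp G T; rewrite T_neq0 sizeT => h; exact: h.
have sc1 : (size c1 <= n)%N.
  apply: leq_trans (size_mulC _ _) _.
  rewrite size_divp ?T_neq0 // sizeT /=; apply: leq_trans (leq_sub2r _ sG) _; lia.
have hG : c0 + b%:P * (T * c1) = G.
  rewrite /c1 [in RHS](divp_eq G T) -/c0.
  have hb : b%:P * b^-1%:P = 1 by rewrite -polyCM mulfV.
  apply/eqP; rewrite -subr_eq0; apply/eqP.
  have -> : forall U V : {poly F}, V + b%:P * (T * (b^-1%:P * U)) - (U * T + V)
     = U * T * (b%:P * b^-1%:P - 1) by move=> U V; ring.
  by rewrite hb subrr mulr0.
have EG' : E %| c0 + b%:P * (T * c1) by rewrite hG.
have [X00 X10] := H c0 c1 sc0 sc1 EG'.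
set Q := c0 * r0 + (alpha * b)%:P * (c0 * r1 + c1 * r0).
have Q0 : Q`_(n.-1) = 0 by rewrite coefD coefCM X00 X10 mulr0 addr0.
have sX0 : (size (c0 * r0)%R <= (2 * n).-1)%N.
  by apply: leq_trans (size_mul_le sc0 s2) _; lia.
have sQ : (size Q <= (2 * n).-1)%N.
  apply: leq_trans (size_polyD _ _) _; rewrite geq_max; apply/andP; split => //.
  apply: leq_trans (size_mulC _ _) _.
  apply: leq_trans (size_polyD _ _) _; rewrite geq_max.
  apply/andP; split; first by apply: leq_trans (size_mul_le sc0 s3) _; lia.
  by apply: leq_trans (size_mul_le sc1 s2) _; lia.
set qq := Q %/ T.
set r := Q %% T.
have sqq : (size qq <= n.-1)%N.
  rewrite size_divp ?T_neq0 // sizeT /=; apply: leq_trans (leq_sub2r _ sQ) _; lia.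
have eQ : Q = qq * T + r by exact: divp_eq.
have r0' : r`_(n.-1) = 0.
  have h2 : (qq * T)`_(n.-1) = 0 := coefZT sqq.
  have h : Q`_(n.-1) = (qq * T)`_(n.-1) + r`_(n.-1) by rewrite -coefD -eQ.
  by rewrite Q0 h2 add0r in h.
have sr : (size r <= n.-1)%N.
  apply: size_lower r0'.
  have := ltn_modp Q T; rewrite T_neq0 sizeT => h; exact: h.
set V := alpha%:P * (c0 * r0) + T * r.
have sV : (size V <= (2 * n).-1)%N.
  apply: leq_trans (size_polyD _ _) _; rewrite geq_max; apply/andP; split.
    by apply: leq_trans (size_mulC _ _) _.
  have sT : (size T <= n.+1)%N by rewrite sizeT.
  by apply: leq_trans (size_mul_le sT sr) _; lia.
set R := b%:P * c1 * (r0 + (alpha * b)%:P * r1).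
have eGK : G * K = V + T ^+ 2 * (qq + R).
  rewrite -hG /K /V /R.
  have e2 : T * r = T * Q - T ^+ 2 * qq by rewrite eQ; ring.
  rewrite e2 /Q polyCM; ring.
set eK := (E * K) %/ T ^+ 2.
have eW : W = E * K - eK * T ^+ 2.
  have h := divp_eq (E * K) (T ^+ 2); rewrite -/W -/eK in h.
  by apply/eqP; rewrite eq_sym subr_eq addrC -h.
set d := ('X^k * E) %/ T ^+ 2.
have key : 'X^k * W - V = T ^+ 2 * (qq + R - 'X^k * eK + d * K).
  have eV : V = G * K - T ^+ 2 * (qq + R) by rewrite eGK addrK.
  rewrite eV eW eG -/d; ring.
have sdiff : (size ('X^k * W - V)%R <= 2 * n)%N.
  apply: leq_trans (size_polyD _ _) _; rewrite size_polyN geq_max; apply/andP; split.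
    rewrite size_XkM // /k; move: sW sW0; move: (size W) => z; lia.
  by apply: leq_trans sV _; lia.
have d0 : 'X^k * W - V = 0.
  apply/eqP; apply: contraTT sdiff => nz.
  have dv : T ^+ 2 %| 'X^k * W - V by rewrite key dvdp_mulIl.
  have := dvdp_leq nz dv.
  rewrite sizeT2 => h; rewrite -ltnNge; exact: h.
move/eqP: d0; rewrite subr_eq0 => /eqP eV.
have := sV; rewrite -eV size_XkM // /k.
move: sW sW0; move: (size W) => z; lia.
Qed.

End Core.


Section Quad.
Variable F : fieldType.

Definition quad (u v : F) : {poly F} := 'X^2 + u *: 'X + v%:P.

Lemma coef_quad u v j :
  (quad u v)`_j = if j == 0%N then v else if j == 1%N then u else if j == 2%N then 1 else 0.
Proof.
rewrite /quad !coefD coefXn coefZ coefX coefC.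
by case: j => [|[|[|j]]] /=; rewrite ?mulr0 ?mulr1 ?add0r ?addr0.
Qed.

Lemma size_quad u v : size (quad u v) = 3%N.
Proof.
apply/eqP; rewrite eqn_leq; apply/andP; split.
  by apply/leq_sizeP => j hj; rewrite coef_quad; case: j hj => [|[|[|j]]].
rewrite ltnNge; apply/negP => /leq_sizeP /(_ 2%N (leqnn _)).
by rewrite coef_quad /= => /eqP; rewrite oner_eq0.
Qed.

Lemma quad_neq0 u v : quad u v != 0.
Proof. by rewrite -size_poly_gt0 size_quad. Qed.

Lemma revn_quad u v : v != 0 -> revn 3 (quad u v) = v *: quad (u / v) v^-1.
Proof.
move=> vn0; apply/polyP=> j; rewrite coef_revn coefZ !coef_quad.
case: j => [|[|[|j]]] //=; rewrite ?mulr0 ?mulr1 ?mulfV //.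
by rewrite mulrC mulfVK.
Qed.

Lemma size_quad_exp u v k : size (quad u v ^+ k) = (2 * k).+1.
Proof.
have := size_exp (quad u v) k; rewrite size_quad /=.
have : (0 < size (quad u v ^+ k))%N by rewrite size_poly_gt0 expf_neq0 // quad_neq0.
move: (size _) => z; lia.
Qed.

Lemma size_quad_pow u1 u2 v a c :
  size (quad u1 v ^+ a * quad u2 v ^+ c) = (2 * (a + c)).+1.
Proof. rewrite size_mul ?expf_neq0 ?quad_neq0 // !size_quad_exp; lia. Qed.

Lemma revn_exp (f : {poly F}) k : (size f <= 3)%N -> revn (2 * k).+1 (f ^+ k) = (revn 3 f) ^+ k.
Proof.
move=> sf; elim: k => [|k IH].
  rewrite !expr0; apply/polyP => j; rewrite coef_revn coefC coef1; by case: j => [|j].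
have sk : (size (f ^+ k) <= (2 * k).+1)%N.
  apply: leq_trans (size_poly_exp_leq _ _) _.
  have : ((size f).-1 <= 2)%N by move: sf; move: (size f) => z; lia.
  by move=> h; rewrite ltnS leq_mul2r h orbT.
have -> : (2 * k.+1).+1 = (3 + (2 * k).+1).-1 by lia.
by rewrite exprS (revnM _ sf sk) // IH exprS.
Qed.

Lemma revn_quads u1 u2 v a c : v != 0 ->
  revn (size (quad u1 v ^+ a * quad u2 v ^+ c)) (quad u1 v ^+ a * quad u2 v ^+ c)
  = v ^+ (a + c) *: (quad (u1 / v) v^-1 ^+ a * quad (u2 / v) v^-1 ^+ c).
Proof.
move=> vn0; rewrite size_quad_pow.
have s1 : (size (quad u1 v ^+ a) <= (2 * a).+1)%N by rewrite size_quad_exp.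
have s2 : (size (quad u2 v ^+ c) <= (2 * c).+1)%N by rewrite size_quad_exp.
have -> : (2 * (a + c)).+1 = ((2 * a).+1 + (2 * c).+1).-1 by lia.
rewrite (revnM _ s1 s2) // !revn_exp ?size_quad // !revn_quad //.
by rewrite !exprZn -scalerAl -scalerAr scalerA exprD.
Qed.

End Quad.


Section More.
Variable F : fieldType.

Lemma revn0 N : revn N (0 : {poly F}) = 0.
Proof. apply/polyP=> j; rewrite coef_revn coef0; case: ifP => _; rewrite ?coef0 ?nth_nil //. Qed.

Lemma revdiv (P H : {poly F}) N : (size H <= N)%N -> P %| H ->
  revn (size P) P %| revn N H.
Proof.
move=> sH /dvdpP [z ez].
have [z0|zn0] := eqVneq z 0; first by rewrite ez z0 mul0r revn0 dvdp0.
have [P0|Pn0] := eqVneq P 0; first by rewrite ez P0 mulr0 !revn0 dvdpp.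
have szP : size H = (size z + size P).-1 by rewrite ez size_mul.
have zp : (0 < size z)%N by rewrite size_poly_gt0.
have Pp : (0 < size P)%N by rewrite size_poly_gt0.
have sz : (size z <= N.+1 - size P)%N.
  move: sH; rewrite szP; move: (size z) (size P) zp Pp => x y; lia.
have -> : N = ((N.+1 - size P) + size P).-1.
  move: sH; rewrite szP; move: (size z) (size P) zp Pp => x y; lia.
rewrite ez (revnM _ sz (leqnn _)); last by move: sH; rewrite szP; move: (size z) (size P) zp Pp => x y; lia.
exact: dvdp_mull.
Qed.

Lemma revn_one N : revn N.+1 (1 : {poly F}) = 'X^N.
Proof.
apply/polyP=> j; rewrite coef_revn coef1 coefXn.
case: ltnP => hj; last by rewrite (_ : (j == N) = false) //; apply/negbTE; apply/eqP; lia.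
by congr (_%:R); apply/eqP/eqP; lia.
Qed.

Lemma revn_T n (l : F) : (0 < n)%N -> revn n.+1 ('X^n - l%:P) = 1 - l *: 'X^n.
Proof.
move=> n0; apply/polyP=> j; rewrite coef_revn coefB coefXn coefC coefB coef1 coefZ coefXn.
case: ltnP => hj.
  have -> : ((n - j)%N == n) = (j == 0%N) by apply/eqP/eqP; lia.
  have -> : ((n - j)%N == 0%N) = (j == n) by apply/eqP/eqP; lia.
  by case: (j == n); rewrite ?mulr1 ?mulr0.
rewrite (_ : (j == 0%N) = false); last by apply/negbTE; apply/eqP; lia.
rewrite (_ : (j == n) = false); last by apply/negbTE; apply/eqP; lia.
by rewrite mulr0 subrr.
Qed.

Lemma revH n (l0 b' : F) (a0 a1 : {poly F}) : (0 < n)%N ->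
  (size a0 <= n)%N -> (size a1 <= n)%N ->
  revn (2 * n) (a0 + b' *: (('X^n - l0%:P) * a1)) =
  'X^n * revn n a0 + b' *: ((1 - l0 *: 'X^n) * revn n a1).
Proof.
move=> n0 s0 s1.
have s1' : (size (1 : {poly F})%R <= n.+1)%N by rewrite size_poly1.
have sT : (size ('X^n - l0%:P : {poly F})%R <= n.+1)%N by rewrite size_XnsubC.
have -> : (2 * n)%N = (n.+1 + n).-1 by lia.
rewrite revnD revnZ -{1}(mul1r a0) (revnM _ s1' s0) // (revnM _ sT s1) //.
by rewrite revn_one revn_T.
Qed.

End More.


Section Words.
Variable F : fieldType.
Notation A := (dualnum F).

Lemma size_sumX n (c : 'I_n -> F) : (size (\sum_(k < n) c k *: 'X^k : {poly F})%R <= n)%N.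
Proof.
apply: (big_ind (fun p : {poly F} => (size p <= n)%N)).
- by rewrite size_poly0.
- by move=> x y hx hy; apply: leq_trans (size_polyD _ _) _; rewrite geq_max hx hy.
- move=> i _; apply: leq_trans (size_scale_leq _ _) _; rewrite size_polyXn; exact: ltn_ord.
Qed.

Lemma coef_sumX n (c : 'I_n -> F) (i : 'I_n) : (\sum_(k < n) c k *: 'X^k : {poly F})`_i = c i.
Proof.
rewrite coef_sum (bigD1 i) //= coefZ coefXn eqxx mulr1 big1 ?addr0 // => k hk.
by rewrite coefZ coefXn (_ : (i == k :> nat) = false) ?mulr0 //; apply/negbTE; rewrite eq_sym.
Qed.

Lemma size_p0 n (w : 'rV[A]_n) : (size (p0 w) <= n)%N. Proof. exact: size_sumX. Qed.
Lemma size_p1 n (w : 'rV[A]_n) : (size (p1 w) <= n)%N. Proof. exact: size_sumX. Qed.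
Lemma coef_p0 n (w : 'rV[A]_n) (i : 'I_n) : (p0 w)`_i = (w 0 i).1.
Proof. exact: (coef_sumX (fun k => (w 0 k).1)). Qed.
Lemma coef_p1 n (w : 'rV[A]_n) (i : 'I_n) : (p1 w)`_i = (w 0 i).2.
Proof. exact: (coef_sumX (fun k => (w 0 k).2)). Qed.

Definition mkword n (c0 c1 : {poly F}) : 'rV[A]_n := \row_(k < n) dn c0`_k c1`_k.

Lemma sumX_eq n (q : {poly F}) : (size q <= n)%N -> \sum_(k < n) q`_k *: 'X^k = q.
Proof.
move=> sq; apply/polyP => j; rewrite coef_sum.
case: (ltnP j n) => hj.
  rewrite (bigD1 (Ordinal hj)) //= coefZ coefXn eqxx mulr1 big1 ?addr0 // => k hk.
  rewrite coefZ coefXn (_ : (j == k :> nat) = false) ?mulr0 //; apply/negbTE.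
  by apply: contra hk => /eqP e; apply/eqP; apply: val_inj.
rewrite nth_default; last by apply: leq_trans sq hj.
rewrite big1 // => k _; rewrite coefZ coefXn (_ : (j == k :> nat) = false) ?mulr0 //.
by apply/negbTE; apply/eqP => e; move: (ltn_ord k); rewrite -e; lia.
Qed.

Lemma p0_mk n (c0 c1 : {poly F}) : (size c0 <= n)%N -> p0 (mkword n c0 c1) = c0.
Proof.
move=> s; rewrite /p0 -{2}(sumX_eq s); apply: eq_bigr => k _; by rewrite mxE.
Qed.
Lemma p1_mk n (c0 c1 : {poly F}) : (size c1 <= n)%N -> p1 (mkword n c0 c1) = c1.
Proof.
move=> s; rewrite /p1 -{2}(sumX_eq s); apply: eq_bigr => k _; by rewrite mxE.
Qed.

Lemma inner_fst n (a c : 'rV[A]_n.+1) :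
  (\sum_(k < n.+1) a 0 k * c 0 k).1 = (p0 c * revn n.+1 (p0 a))`_n.
Proof.
rewrite fst_sum coefM; apply: eq_bigr => i _.
rewrite fstM coef_revn ifT; last by rewrite ltnS leq_subr.
have -> : (n.+1.-1 - (n - i))%N = i by move: (ltn_ord i); lia.
by rewrite coef_p0 coef_p0 mulrC.
Qed.

Lemma inner_snd n (a c : 'rV[A]_n.+1) :
  (\sum_(k < n.+1) a 0 k * c 0 k).2 =
  (p0 c * revn n.+1 (p1 a) + p1 c * revn n.+1 (p0 a))`_n.
Proof.
rewrite snd_sum coefD !coefM -big_split; apply: eq_bigr => i _.
rewrite sndM !coef_revn ltnS leq_subr /=.
have -> : (n.+1.-1 - (n - i))%N = i by move: (ltn_ord i); lia.
rewrite !coef_p0 !coef_p1 /=; ring.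
Qed.

End Words.


Section Aux.
Variable F : fieldType.

Lemma inner_fst' n (n0 : (0 < n)%N) (a c : 'rV[dualnum F]_n) :
  (\sum_(k < n) a 0 k * c 0 k).1 = (p0 c * revn n (p0 a))`_(n.-1).
Proof. by case: n n0 a c => [|n] // _ a c; rewrite inner_fst. Qed.

Lemma inner_snd' n (n0 : (0 < n)%N) (a c : 'rV[dualnum F]_n) :
  (\sum_(k < n) a 0 k * c 0 k).2 =
  (p0 c * revn n (p1 a) + p1 c * revn n (p0 a))`_(n.-1).
Proof. by case: n n0 a c => [|n] // _ a c; rewrite inner_snd. Qed.

Lemma pow_split (f g : {poly F}) i j M : (i <= M)%N -> (j <= M)%N ->
  f ^+ i * g ^+ j * (f ^+ (M - i) * g ^+ (M - j)) = (f * g) ^+ M.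
Proof.
move=> hi hj.
have h1 : f ^+ M = f ^+ i * f ^+ (M - i) by rewrite -exprD subnKC.
have h2 : g ^+ M = g ^+ j * g ^+ (M - j) by rewrite -exprD subnKC.
by rewrite exprMn h1 h2; ring.
Qed.

Lemma quad_mul (g c z : F) : c *+ 2 = g ^+ 2 -> c ^+ 2 = - z ->
  quad g c * quad (- g) c = 'X^4 - z%:P.
Proof.
move=> h1 h2.
have e : quad g c * quad (- g) c = 'X^4 + (c *+ 2 - g ^+ 2)%:P * 'X^2 + (c ^+ 2)%:P.
  rewrite /quad -!mul_polyC polyCN rmorphB rmorphMn !rmorphXn; ring.
by rewrite e h1 subrr polyC0 mul0r addr0 h2 polyCN.
Qed.

Lemma frobX4 (p s : nat) (z : F) : prime p -> p \in [pchar F] ->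
  ('X^4 - z%:P) ^+ (p ^ s) = 'X^(4 * p ^ s) - (z ^+ (p ^ s))%:P.
Proof.
move=> pP pc.
have hn : [pchar {poly F}].-nat (p ^ s)%N.
  rewrite (@eq_pnat _ (p : nat_pred)); first by rewrite pnatX pnat_id.
  by move=> q; rewrite pchar_poly (pcharf_eq pc).
by rewrite exprDn_pchar // exprNn_pchar // -exprM rmorphXn.
Qed.

End Aux.


Unset Implicit Arguments.
Lemma kf_alg (F : fieldType) (A I B X R0 R1 : {poly F}) : A * I = 1 ->
  X * R0 + (- (A * (A * B))) * ((1 - I * X) * R1) = A * R0 + (X - A) * (R0 + A * B * R1).
Proof.
move=> h; apply/eqP; rewrite -subr_eq0; apply/eqP.
have -> : X * R0 + (- (A * (A * B))) * ((1 - I * X) * R1) - (A * R0 + (X - A) * (R0 + A * B * R1))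
  = A * B * X * R1 * (A * I - 1) by ring.
by rewrite h subrr mulr0.
Qed.

Theorem theorem3p7 (p m s : nat) (F : finFieldType)
    (alpha alpha0 gamma beta : F) (lam_inv : dualnum F) (i j : nat) :
  prime p -> odd p -> (0 < m)%N -> (0 < s)%N ->
  #|F| = (p ^ m)%N ->
  (p ^ m %% 4 = 3)%N ->
  alpha != 0 ->
  (forall y : F, y ^+ 2 != alpha) ->
  alpha0 ^+ (p ^ s) = alpha ->
  gamma ^+ 4 + 4%:R * alpha0 = 0 ->
  beta != 0 ->
  (i <= 2 * p ^ s)%N -> (j <= 2 * p ^ s)%N ->
  (dn alpha beta : dualnum F) * lam_inv = 1 ->
  forall c : 'rV[dualnum F]_(4 * p ^ s),
    dual_code
      (constacyclic_ideal (dn alpha beta)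
         (map_poly (@dconst F)
            (('X^2 + gamma *: 'X + (gamma ^+ 2 / 2%:R)%:P) ^+ i
             * ('X^2 - gamma *: 'X + (gamma ^+ 2 / 2%:R)%:P) ^+ j))) c
    <->
    constacyclic_ideal lam_inv
      (map_poly (@dconst F)
         (('X^2 + (2%:R / gamma) *: 'X + (2%:R / gamma ^+ 2)%:P) ^+ (2 * p ^ s - i)
          * ('X^2 - (2%:R / gamma) *: 'X + (2%:R / gamma ^+ 2)%:P) ^+ (2 * p ^ s - j))) c.
Proof.
move=> pP pO m0 s0 hcard _ an0 _ ha0 hg bn0 hi hj hinv a.
have pc : p \in [pchar F] := card_finPcharP hcard pP.
have two0 : (2%:R : F) != 0.
  apply/negP; rewrite -(dvdn_pcharf pc) => /dvdn_leq-/(_ isT) h.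
  have p2 : p = 2%N by move: (prime_gt1 pP) h; lia.
  by move: pO; rewrite p2.
have four : (4%:R : F) = 2%:R * 2%:R by rewrite -natrM.
have four0 : (4%:R : F) != 0 by rewrite four mulf_neq0.
set N := (p ^ s)%N.
have N0 : (0 < N)%N by rewrite expn_gt0 prime_gt0.
set n := (4 * N)%N.
have n0 : (0 < n)%N by rewrite /n; lia.
have a00 : alpha0 != 0.
  apply/eqP => e; move/eqP: an0; apply.
  by rewrite -ha0 e expr0n (negbTE (lt0n_neq0 N0)).
have g4 : gamma ^+ 4 = - (4%:R * alpha0) by apply/eqP; rewrite -addr_eq0 hg.
have gn0 : gamma != 0.
  apply/negP => /eqP g0; move: g4; rewrite g0 expr0n /= => /eqP.
  by rewrite eq_sym oppr_eq0 mulf_eq0 (negbTE four0) (negbTE a00).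
set cc := gamma ^+ 2 / 2%:R.
set u' := 2%:R / gamma.
set c' := 2%:R / gamma ^+ 2.
have cc0 : cc != 0 by rewrite /cc mulf_neq0 ?invr_eq0 // expf_neq0.
have c'0 : c' != 0 by rewrite /c' mulf_neq0 ?invr_eq0 // expf_neq0.
have -> : 'X^2 + gamma *: 'X + (gamma ^+ 2 / 2%:R)%:P = quad gamma cc by [].
have -> : 'X^2 - gamma *: 'X + (gamma ^+ 2 / 2%:R)%:P = quad (- gamma) cc.
  by rewrite /quad scaleNr.
have -> : 'X^2 + (2%:R / gamma) *: 'X + (2%:R / gamma ^+ 2)%:P = quad u' c' by [].
have -> : 'X^2 - (2%:R / gamma) *: 'X + (2%:R / gamma ^+ 2)%:P = quad (- u') c'.
  by rewrite /quad scaleNr.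
set l0 := lam_inv.1; set l1 := lam_inv.2.
have hl : lam_inv = dn l0 l1 by rewrite /l0 /l1; case: (lam_inv).
have h1 : alpha * l0 = 1 by have := congr1 fst hinv; rewrite fstM.
have h2 : alpha * l1 + beta * l0 = 0 by have := congr1 snd hinv; rewrite sndM.
have hl0 : l0 = alpha^-1 by rewrite -[l0](mulKf an0) h1 mulr1.
have hl1 : l1 = - (beta * alpha^-1) / alpha.
  apply: (mulfI an0); rewrite [RHS]mulrC mulfVK //; apply/eqP; rewrite -addr_eq0 -hl0; exact/eqP.
have l1n0 : l1 != 0 by rewrite hl1 mulf_neq0 ?invr_eq0 // oppr_eq0 mulf_neq0 // invr_eq0.
have hb' : l1^-1 = - (alpha * (alpha * beta^-1)).
  by rewrite hl1; field; rewrite bn0 an0 oppr_eq0 bn0.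
have hf : quad gamma cc * quad (- gamma) cc = 'X^4 - alpha0%:P.
  apply: quad_mul.
    by rewrite /cc -mulr_natr; field ; rewrite ?four0 ?two0 ?gn0 ?an0 ?bn0 ?a00 ?cc0 ?c'0 ?expf_neq0 ?oppr_eq0 ?mulf_neq0 ?invr_eq0 ?eqxx //.
  have -> : cc ^+ 2 = gamma ^+ 4 / (2%:R * 2%:R) by rewrite /cc; field ; rewrite ?four0 ?two0 ?gn0 ?an0 ?bn0 ?a00 ?cc0 ?c'0 ?expf_neq0 ?oppr_eq0 ?mulf_neq0 ?invr_eq0 ?eqxx //.
  by rewrite g4 -four; field ; rewrite ?four0 ?two0 ?gn0 ?an0 ?bn0 ?a00 ?cc0 ?c'0 ?expf_neq0 ?oppr_eq0 ?mulf_neq0 ?invr_eq0 ?eqxx //.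
have hfr : quad u' c' * quad (- u') c' = 'X^4 - (alpha0^-1)%:P.
  apply: quad_mul.
    by rewrite /c' /u' -mulr_natr; field ; rewrite ?four0 ?two0 ?gn0 ?an0 ?bn0 ?a00 ?cc0 ?c'0 ?expf_neq0 ?oppr_eq0 ?mulf_neq0 ?invr_eq0 ?eqxx //.
  have -> : c' ^+ 2 = 2%:R * 2%:R / gamma ^+ 4 by rewrite /c'; field ; rewrite ?four0 ?two0 ?gn0 ?an0 ?bn0 ?a00 ?cc0 ?c'0 ?expf_neq0 ?oppr_eq0 ?mulf_neq0 ?invr_eq0 ?eqxx //.
  by rewrite g4 -four; field ; rewrite ?four0 ?two0 ?gn0 ?an0 ?bn0 ?a00 ?cc0 ?c'0 ?expf_neq0 ?oppr_eq0 ?mulf_neq0 ?invr_eq0 ?eqxx //.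
set T := 'X^n - alpha%:P.
set T' := 'X^n - l0%:P.
have hT : (quad gamma cc * quad (- gamma) cc) ^+ N = T.
  by rewrite hf frobX4 // ha0.
have hT' : (quad u' c' * quad (- u') c') ^+ N = T'.
  by rewrite hfr frobX4 // exprVn ha0 /T' hl0.
set E := quad gamma cc ^+ i * quad (- gamma) cc ^+ j.
set E' := quad gamma cc ^+ (2 * N - i) * quad (- gamma) cc ^+ (2 * N - j).
set Es := quad u' c' ^+ (2 * N - i) * quad (- u') c' ^+ (2 * N - j).
have hEE : E * E' = T ^+ 2 by rewrite /E /E' pow_split // mulnC exprM hT.
have hET : E %| T ^+ 2 by rewrite -hEE dvdp_mulIl.
have hEsT : Es %| T' ^+ 2.
  rewrite -hT' -exprM mulnC -(pow_split _ _ (leq_subr i (2 * N)) (leq_subr j (2 * N))).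
  exact: dvdp_mulIl.
have rE' : revn (size E') E' = cc ^+ (2 * N - i + (2 * N - j)) *: Es.
  rewrite /E' revn_quads //.
  have -> : gamma / cc = u' by rewrite /cc /u'; field ; rewrite ?four0 ?two0 ?gn0 ?an0 ?bn0 ?a00 ?cc0 ?c'0 ?expf_neq0 ?oppr_eq0 ?mulf_neq0 ?invr_eq0 ?eqxx //.
  have -> : - gamma / cc = - u' by rewrite /cc /u'; field ; rewrite ?four0 ?two0 ?gn0 ?an0 ?bn0 ?a00 ?cc0 ?c'0 ?expf_neq0 ?oppr_eq0 ?mulf_neq0 ?invr_eq0 ?eqxx //.
  by have -> : cc^-1 = c' by rewrite /cc /c'; field ; rewrite ?four0 ?two0 ?gn0 ?an0 ?bn0 ?a00 ?cc0 ?c'0 ?expf_neq0 ?oppr_eq0 ?mulf_neq0 ?invr_eq0 ?eqxx //.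
have rEs : revn (size Es) Es = c' ^+ (2 * N - i + (2 * N - j)) *: E'.
  rewrite /Es revn_quads //.
  have -> : u' / c' = gamma by rewrite /u' /c'; field ; rewrite ?four0 ?two0 ?gn0 ?an0 ?bn0 ?a00 ?cc0 ?c'0 ?expf_neq0 ?oppr_eq0 ?mulf_neq0 ?invr_eq0 ?eqxx //.
  have -> : - u' / c' = - gamma by rewrite /u' /c'; field ; rewrite ?four0 ?two0 ?gn0 ?an0 ?bn0 ?a00 ?cc0 ?c'0 ?expf_neq0 ?oppr_eq0 ?mulf_neq0 ?invr_eq0 ?eqxx //.
  by have -> : c'^-1 = cc by rewrite /cc /c'; field ; rewrite ?four0 ?two0 ?gn0 ?an0 ?bn0 ?a00 ?cc0 ?c'0 ?expf_neq0 ?oppr_eq0 ?mulf_neq0 ?invr_eq0 ?eqxx //.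
have sa0 := size_p0 a; have sa1 := size_p1 a.
set r0 := revn n (p0 a); set r1 := revn n (p1 a).
set H := p0 a + l1^-1 *: (T' * p1 a).
set K := alpha%:P * r0 + T * (r0 + (alpha * beta^-1)%:P * r1).
have KF : revn (2 * n) H = K.
  rewrite /H /T' (revH _ _ n0 sa0 sa1) -/r0 -/r1 hb' hl0 /K /T.
  rewrite -!mul_polyC polyCN !polyCM.
  by apply: kf_alg; rewrite -polyCM mulfV.
have nn : (n <= 2 * n)%N by rewrite mul2n -addnn leq_addr.
have n2 : ((n.+1 + n).-1 = 2 * n)%N by rewrite addSn /= mul2n addnn.
have hHs : (size H <= 2 * n)%N.
  apply: leq_trans (size_polyD _ _) _; rewrite geq_max; apply/andP; split.
    exact: leq_trans sa0 nn.
  apply: leq_trans (size_scale_leq _ _) _.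
  have sT : (size T' <= n.+1)%N by rewrite size_XnsubC.
  by apply: leq_trans (size_mul_le sT sa1) _; rewrite n2.
have HK : H = revn (2 * n) K by rewrite -KF revnK.
have sK : (size K <= 2 * n)%N by rewrite -KF size_revn.
split => [hd | hc].
- have hK : E' %| K.
    apply: (keyB (b := beta^-1) n0 an0 (invr_neq0 bn0) hEE (size_revn _ _) (size_revn _ _)).
    move=> c0 c1 s0' s1' hEc.
    have Cw : constacyclic_ideal (dn alpha beta) (map_poly (@dconst F) E) (mkword n c0 c1).
      apply: (proj2 (charac _ _ _ bn0)); rewrite p0_mk // p1_mk // -mul_polyC; exact: hEc.
    have hs := hd _ Cw.
    have e1 := inner_fst' n0 a (mkword n c0 c1).
    have e2 := inner_snd' n0 a (mkword n c0 c1).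
    rewrite hs p0_mk // p1_mk // in e1 e2.
  have := revdiv sK hK; rewrite rE' dvdpZl ?expf_neq0 // -HK => hEsH.
  rewrite hl; apply: (proj2 (charac _ _ _ l1n0)); exact: hEsH.
- rewrite hl in hc.
  have hEsH : Es %| H := (proj1 (charac _ _ _ l1n0)) hEsT hc.
  have hK : E' %| K by have := revdiv hHs hEsH; rewrite rEs dvdpZl ?expf_neq0 // KF.
  move=> w Cw.
  have hEw := (proj1 (charac _ _ _ bn0)) hET Cw.
  have hT2 : T ^+ 2 %| (p0 w + (beta^-1)%:P * (T * p1 w)) * K.
    by rewrite -hEE; apply: dvdp_mul => //; rewrite mul_polyC.
  have [k1 k2] := keyA n0 an0 (invr_neq0 bn0) (size_p0 w) (size_p1 w)
                    (size_revn _ _) (size_revn _ _) hT2.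
  have e1 := inner_fst' n0 a w; have e2 := inner_snd' n0 a w.
  rewrite -/r0 -/r1 k1 in e1; rewrite -/r0 -/r1 k2 in e2.
  by move: (\sum_(k < n) a 0 k * w 0 k) e1 e2 => [x y] /= -> ->.
Qed.
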